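(* Let $P(x)=3(x/\Upsilon)^2-2(x/\Upsilon)^3$, $Q(x)=1-P(\Upsilon+(1-\Upsilon)x)$, $\vartheta=10^{-10}$, $\Upsilon=0.64$. Then for all real $u\ge10$ and all real $v\ne0$ with $|v|\le5u$, $$\mathscr V(u,v)\le 1+e^{-u/2}.$$
   Context: Put $\kappa:=1-5\vartheta$, $w:=u+iv$, and define (sums over $j$ are finite since $P,Q$ are cubic) $\mathcal P(w):=e^{-2w\kappa}\sum_{j\ge2}\frac{P^{(j)}(0)}{(-2w\kappa)^j}$, $\mathcal Q(w):=e^{-2w\kappa(1-\Upsilon)}\sum_{j\ge2}\frac{Q^{(j)}(0)}{(-2w\kappa(1-\Upsilon))^j}$, $D(x):=\frac{iv}{w}P'(x)+\frac{u}{2w^2\kappa}P''(x)-\frac{u}{4w^3\kappa^2}P'''(x)$, $E(x):=\frac{u}{w}P'(x)+\frac{iv}{2w^2\kappa}P''(x)-\frac{iv}{4w^3\kappa^2}P'''(x)$. Then $\mathscr V(u,v):=\mathscr V_1+\mathscr V_2+\mathscr V_3$ with $\mathscr V_1:=1+\frac{1}{2u\kappa}\int_0^\Upsilon e^{-2u(1-x)\kappa}P'(x)^2dx$; $\mathscr V_2:=e^{-4u}\Big[-\frac{1}{2u\kappa}\int_0^\Upsilon e^{-2u(1-x)\kappa}|D(x)|^2dx+2\Re\Big\{\overline{\mathcal P(w)}\int_0^\Upsilon e^{-2iv(1-x)\kappa}D(x)\,dx\Big\}+\big(e^{2u\kappa(1-\Upsilon)}-e^{2u\kappa}\big)|\mathcal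 P(w)|^2+\big(1-e^{2u\kappa(1-\Upsilon)}\big)|\mathcal P(w)+\mathcal Q(w)|^2\Big]$; $\mathscr V_3:=-2\Re\Big\{e^{-2w}\Big[\frac{1}{-2iv\kappa}\int_0^\Upsilon e^{-2u(1-x)\kappa}\big(-2iv\kappa P(x)+P'(x)\big)E(x)\,dx+\mathcal P(w)\int_0^\Upsilon e^{2iv(1-x)\kappa}\big(-2iv\kappa P(x)+P'(x)\big)dx+\big(1-e^{2iv(1-\Upsilon)\kappa}\big)\big(\mathcal P(w)+\mathcal Q(w)\big)\Big]\Big\}$. *)

(* Defs.v *)
From Stdlib Require Import Reals Lra Classical ClassicalEpsilon.
Open Scope R_scope.

(* [Rint f a b] is the Riemann integral of f over [a,b] when f is Riemann
   integrable there (its value does not depend on the integrability proof,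
   cf. RiemannInt_P5); it is 0 otherwise (never used: all integrands below
   are continuous). *)
Definition Rint (f : R -> R) (a b : R) : R :=
  match excluded_middle_informative
          (exists pr : Riemann_integrable f a b, True) with
  | left H => RiemannInt (proj1_sig (constructive_indefinite_description _ H))
  | right _ => 0
  end.

Record C := mkC { Re : R; Im : R }.
Definition RtoC (x : R) : C := mkC x 0.
Definition Ci : C := mkC 0 1.
Definition Cadd (z w : C) : C := mkC (Re z + Re w) (Im z + Im w).
Definition Copp (z : C) : C := mkC (- Re z) (- Im z).
Definition Csub (z w : C) : C := Cadd z (Copp w).
Definition Cmul (z w : C) : C :=
  mkC (Re z * Re w - Im z * Im w) (Re z * Im w + Im z * Re w).
Definition Cconj (z : C) : C := mkC (Re z) (- Im z).
Definition Cnorm2 (z : C) : R := Re z * Re z + Im z * Im z.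
Definition Cinv (z : C) : C := mkC (Re z / Cnorm2 z) (- Im z / Cnorm2 z).
Definition Cdiv (z w : C) : C := Cmul z (Cinv w).
Definition Cexp (z : C) : C := mkC (exp (Re z) * cos (Im z)) (exp (Re z) * sin (Im z)).
Definition Cint (f : R -> C) (a b : R) : C :=
  mkC (Rint (fun x => Re (f x)) a b) (Rint (fun x => Im (f x)) a b).

Definition vartheta : R := / 10 ^ 10.
Definition Upsilon : R := 64 / 100.
Definition kappa : R := 1 - 5 * vartheta.

Definition P (x : R) : R := 3 * (x / Upsilon) ^ 2 - 2 * (x / Upsilon) ^ 3.
Definition P1 (x : R) : R := 6 * x / Upsilon ^ 2 - 6 * x ^ 2 / Upsilon ^ 3.
Definition P2 (x : R) : R := 6 / Upsilon ^ 2 - 12 * x / Upsilon ^ 3.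
Definition P3 (x : R) : R := - 12 / Upsilon ^ 3.
Definition Q (x : R) : R := 1 - P (Upsilon + (1 - Upsilon) * x).
Definition Q1 (x : R) : R := - (1 - Upsilon) * P1 (Upsilon + (1 - Upsilon) * x).
Definition Q2 (x : R) : R := - (1 - Upsilon) ^ 2 * P2 (Upsilon + (1 - Upsilon) * x).
Definition Q3 (x : R) : R := - (1 - Upsilon) ^ 3 * P3 (Upsilon + (1 - Upsilon) * x).

Lemma P_deriv x : derivable_pt_lim P x (P1 x).
Proof.
  unfold P, P1.
  assert (H : derivable_pt_lim (fun x => 3 * (x / Upsilon) ^ 2 - 2 * (x / Upsilon) ^ 3) x
     (3 * (INR 2 * (x / Upsilon) ^ 1 * (1 * / Upsilon)) - 2 * (INR 3 * (x / Upsilon) ^ 2 * (1 * / Upsilon)))).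
  { apply derivable_pt_lim_minus; apply derivable_pt_lim_scal;
    apply (derivable_pt_lim_comp (fun x => x / Upsilon) (fun y => y ^ _));
    try apply derivable_pt_lim_pow;
    apply (derivable_pt_lim_scal_right id); apply derivable_pt_lim_id. }
  replace (6 * x / Upsilon ^ 2 - 6 * x ^ 2 / Upsilon ^ 3) with
     (3 * (INR 2 * (x / Upsilon) ^ 1 * (1 * / Upsilon)) - 2 * (INR 3 * (x / Upsilon) ^ 2 * (1 * / Upsilon))).
  exact H. unfold Upsilon; simpl; field.
Qed.

Definition w_of (u v : R) : C := mkC u v.

Definition calP (u v : R) : C :=
  let z := Cmul (RtoC (-2 * kappa)) (w_of u v) in
  Cmul (Cexp z)
    (Cadd (Cdiv (RtoC (P2 0)) (Cmul z z)) (Cdiv (RtoC (P3 0)) (Cmul z (Cmul z z)))).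

Definition calQ (u v : R) : C :=
  let z := Cmul (RtoC (-2 * kappa * (1 - Upsilon))) (w_of u v) in
  Cmul (Cexp z)
    (Cadd (Cdiv (RtoC (Q2 0)) (Cmul z z)) (Cdiv (RtoC (Q3 0)) (Cmul z (Cmul z z)))).

Definition Dfun (u v x : R) : C :=
  let w := w_of u v in
  Csub (Cadd (Cmul (Cdiv (mkC 0 v) w) (RtoC (P1 x)))
             (Cmul (Cdiv (RtoC u) (Cmul (RtoC (2 * kappa)) (Cmul w w))) (RtoC (P2 x))))
       (Cmul (Cdiv (RtoC u) (Cmul (RtoC (4 * kappa ^ 2)) (Cmul w (Cmul w w)))) (RtoC (P3 x))).

Definition Efun (u v x : R) : C :=
  let w := w_of u v in
  Csub (Cadd (Cmul (Cdiv (RtoC u) w) (RtoC (P1 x)))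
             (Cmul (Cdiv (mkC 0 v) (Cmul (RtoC (2 * kappa)) (Cmul w w))) (RtoC (P2 x))))
       (Cmul (Cdiv (mkC 0 v) (Cmul (RtoC (4 * kappa ^ 2)) (Cmul w (Cmul w w)))) (RtoC (P3 x))).

Definition scrV1 (u v : R) : R :=
  1 + 1 / (2 * u * kappa) *
      Rint (fun x => exp (-2 * u * (1 - x) * kappa) * P1 x ^ 2) 0 Upsilon.

Definition scrV2 (u v : R) : R :=
  exp (-4 * u) *
  ( - (1 / (2 * u * kappa)) *
        Rint (fun x => exp (-2 * u * (1 - x) * kappa) * Cnorm2 (Dfun u v x)) 0 Upsilon
    + 2 * Re (Cmul (Cconj (calP u v))
                   (Cint (fun x => Cmul (Cexp (mkC 0 (-2 * v * (1 - x) * kappa))) (Dfun u v x))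
                         0 Upsilon))
    + (exp (2 * u * kappa * (1 - Upsilon)) - exp (2 * u * kappa)) * Cnorm2 (calP u v)
    + (1 - exp (2 * u * kappa * (1 - Upsilon))) * Cnorm2 (Cadd (calP u v) (calQ u v)) ).

Definition scrV3 (u v : R) : R :=
  let G := fun x => Cadd (Cmul (mkC 0 (-2 * v * kappa)) (RtoC (P x))) (RtoC (P1 x)) in
  - 2 * Re (Cmul (Cexp (Cmul (RtoC (-2)) (w_of u v)))
     (Cadd (Cadd
        (Cmul (Cinv (mkC 0 (-2 * v * kappa)))
              (Cint (fun x => Cmul (RtoC (exp (-2 * u * (1 - x) * kappa)))
                                   (Cmul (G x) (Efun u v x))) 0 Upsilon))
        (Cmul (calP u v)
              (Cint (fun x => Cmul (Cexp (mkC 0 (2 * v * (1 - x) * kappa))) (G x)) 0 Upsilon)))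
        (Cmul (Csub (RtoC 1) (Cexp (mkC 0 (2 * v * (1 - Upsilon) * kappa))))
              (Cadd (calP u v) (calQ u v))))).

Definition scrV (u v : R) : R := scrV1 u v + scrV2 u v + scrV3 u v.

(* Main.v *)
Require Import Defs.
From Stdlib Require Import Reals Lra Psatz Classical ClassicalEpsilon.
Import Defs.
Open Scope R_scope.

Lemma kappa_bounds : 99/100 <= kappa <= 1.
Proof.
  unfold kappa, vartheta.
  assert (H : 0 < / 10 ^ 10) by (apply Rinv_0_lt_compat; apply pow_lt; lra).
  assert (H2 : / 10 ^ 10 <= / 500).
  { apply Rinv_le_contravar; [lra|]. simpl; lra. }
  lra.
Qed.

Lemma Rint_bound f a b M : a <= b ->
  (forall x, a <= x <= b -> Rabs (f x) <= M) -> Rabs (Rint f a b) <= (b - a) * M.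
Proof.
  intros Hab HM. assert (HM0 : 0 <= M).
  { apply Rle_trans with (Rabs (f a)); [apply Rabs_pos| apply HM; lra]. }
  unfold Rint. destruct excluded_middle_informative as [H|H].
  - match goal with |- context [proj1_sig ?X] => generalize (proj1_sig X) end; intro pr.
    replace ((b - a) * M) with (RiemannInt (RiemannInt_P14 a b M)) by (rewrite RiemannInt_P15; ring).
    apply Rabs_le; split.
    + replace (- RiemannInt (RiemannInt_P14 a b M)) with
        (RiemannInt (RiemannInt_P14 a b (-M))).
      2:{ rewrite !RiemannInt_P15; ring. }
      apply RiemannInt_P19; auto. intros x Hx. unfold fct_cte.
      assert (Hx' := HM x ltac:(lra)). revert Hx'; unfold Rabs; destruct Rcase_abs; lra.
    + apply RiemannInt_P19; auto. intros x Hx. unfold fct_cte.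
      assert (Hx' := HM x ltac:(lra)). apply Rle_trans with (Rabs (f x)); auto.
      apply RRle_abs.
  - rewrite Rabs_R0. apply Rmult_le_pos; lra.
Qed.

Lemma Rint_nonneg f a b : a <= b ->
  (forall x, a <= x <= b -> 0 <= f x) -> 0 <= Rint f a b.
Proof.
  intros Hab HM.
  unfold Rint. destruct excluded_middle_informative as [H|H].
  - match goal with |- context [proj1_sig ?X] => generalize (proj1_sig X) end; intro pr.
    replace 0 with (RiemannInt (RiemannInt_P14 a b 0)).
    2:{ rewrite RiemannInt_P15; ring. }
    apply RiemannInt_P19; auto. intros x Hx. unfold fct_cte. apply HM; lra.
  - lra.
Qed.

Definition cm (z : C) : R := sqrt (Cnorm2 z).

Lemma Cnorm2_nonneg z : 0 <= Cnorm2 z.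
Proof. unfold Cnorm2; nra. Qed.

Lemma cm_nonneg z : 0 <= cm z.
Proof. apply sqrt_pos. Qed.

Lemma cm_mul z w : cm (Cmul z w) = cm z * cm w.
Proof.
  unfold cm. rewrite <- sqrt_mult by apply Cnorm2_nonneg. f_equal.
  destruct z, w; unfold Cnorm2, Cmul; simpl; ring.
Qed.

Lemma abs_sqrt x : Rabs x = sqrt (x * x).
Proof. rewrite <- sqrt_Rsqr_abs. unfold Rsqr. reflexivity. Qed.

Lemma cm_add z w : cm (Cadd z w) <= cm z + cm w.
Proof.
  unfold cm. destruct z as [a b], w as [c d]; unfold Cnorm2, Cadd; simpl.
  set (s1 := sqrt (a*a+b*b)). set (s2 := sqrt (c*c+d*d)).
  assert (H1 : s1 * s1 = a*a+b*b) by (apply sqrt_sqrt; nra).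
  assert (H2 : s2 * s2 = c*c+d*d) by (apply sqrt_sqrt; nra).
  assert (P1 : 0 <= s1) by apply sqrt_pos. assert (P2 : 0 <= s2) by apply sqrt_pos.
  assert (HC : a*c+b*d <= s1 * s2).
  { apply Rle_trans with (Rabs (a*c+b*d)); [apply RRle_abs|].
    rewrite abs_sqrt. unfold s1, s2. rewrite <- sqrt_mult by nra.
    apply sqrt_le_1_alt. pose proof (pow2_ge_0 (a*d-b*c)); nra. }
  rewrite <- (sqrt_square (s1 + s2)) by lra.
  apply sqrt_le_1_alt. nra.
Qed.

Lemma abs_Re_le z : Rabs (Re z) <= cm z.
Proof. rewrite abs_sqrt; unfold cm, Cnorm2; apply sqrt_le_1_alt; nra. Qed.
Lemma abs_Im_le z : Rabs (Im z) <= cm z.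
Proof. rewrite abs_sqrt; unfold cm, Cnorm2; apply sqrt_le_1_alt; nra. Qed.
Lemma Re_le z : Re z <= cm z.
Proof. eapply Rle_trans; [apply RRle_abs|apply abs_Re_le]. Qed.

Lemma cm_le_sum z : cm z <= Rabs (Re z) + Rabs (Im z).
Proof.
  unfold cm, Cnorm2. rewrite <- (sqrt_square (Rabs (Re z) + Rabs (Im z))).
  2:{ generalize (Rabs_pos (Re z)) (Rabs_pos (Im z)); lra. }
  apply sqrt_le_1_alt.
  generalize (Rabs_pos (Re z)) (Rabs_pos (Im z)). intros.
  assert (E1: Re z * Re z = Rabs (Re z) * Rabs (Re z)) by (rewrite <- Rabs_mult; rewrite Rabs_right; [ring|nra]).
  assert (E2: Im z * Im z = Rabs (Im z) * Rabs (Im z)) by (rewrite <- Rabs_mult; rewrite Rabs_right; [ring|nra]).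
  rewrite E1, E2. nra.
Qed.

Lemma cm_RtoC x : cm (RtoC x) = Rabs x.
Proof. unfold cm, Cnorm2, RtoC; simpl. rewrite abs_sqrt; f_equal; ring. Qed.

Lemma cm_exp z : cm (Cexp z) = exp (Re z).
Proof.
  unfold cm, Cnorm2, Cexp; simpl.
  replace (exp (Re z) * cos (Im z) * (exp (Re z) * cos (Im z)) +
    exp (Re z) * sin (Im z) * (exp (Re z) * sin (Im z))) with (exp (Re z) * exp (Re z)).
  - apply sqrt_square. left; apply exp_pos.
  - transitivity (exp (Re z) * exp (Re z) * (sin (Im z) ^ 2 + cos (Im z) ^ 2)).
    + assert (HH: sin(Im z)^2 + cos(Im z)^2 = 1) by (pose proof (sin2_cos2 (Im z)); unfold Rsqr in *; nra). rewrite HH; ring.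
    + ring.
Qed.

Lemma cm_inv z : Cnorm2 z <> 0 -> cm (Cinv z) = / cm z.
Proof.
  intros H. unfold cm. rewrite <- sqrt_inv. f_equal.
  destruct z as [a b]; unfold Cnorm2, Cinv in *; simpl in *. unfold Cnorm2; simpl. field. auto.
Qed.

Lemma cm_div z w : Cnorm2 w <> 0 -> cm (Cdiv z w) = cm z / cm w.
Proof. intros H; unfold Cdiv; rewrite cm_mul, cm_inv by auto. reflexivity. Qed.

Lemma cm_opp z : cm (Copp z) = cm z.
Proof. unfold cm, Cnorm2, Copp; simpl; f_equal; ring. Qed.
Lemma cm_conj z : cm (Cconj z) = cm z.
Proof. unfold cm, Cnorm2, Cconj; simpl; f_equal; ring. Qed.
Lemma cm_sub z w : cm (Csub z w) <= cm z + cm w.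
Proof. unfold Csub. rewrite <- (cm_opp w). apply cm_add. Qed.

Lemma cm_zero_inv z : 0 < cm z -> Cnorm2 z <> 0.
Proof. unfold cm; intros H E; rewrite E, sqrt_0 in H; lra. Qed.

Lemma cm_Cint f a b M : a <= b -> (forall x, a <= x <= b -> cm (f x) <= M) ->
  cm (Cint f a b) <= 2 * (b - a) * M.
Proof.
  intros Hab H. eapply Rle_trans; [apply cm_le_sum|]. unfold Cint; simpl.
  assert (H1 : Rabs (Rint (fun x => Re (f x)) a b) <= (b - a) * M).
  { apply Rint_bound; auto. intros x Hx. eapply Rle_trans; [apply abs_Re_le|auto]. }
  assert (H2 : Rabs (Rint (fun x => Im (f x)) a b) <= (b - a) * M).
  { apply Rint_bound; auto. intros x Hx. eapply Rle_trans; [apply abs_Im_le|auto]. }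
  lra.
Qed.

Lemma abs_le_iff x M : Rabs x <= M <-> -M <= x <= M.
Proof. unfold Rabs; destruct Rcase_abs; split; intros; lra. Qed.

Lemma P_bounds x : 0 <= x <= Upsilon ->
  Rabs (P x) <= 1 /\ Rabs (P1 x) <= 3 /\ Rabs (P2 x) <= 15 /\ Rabs (P3 x) <= 46.
Proof.
  intros Hx. unfold P, P1, P2, P3, Upsilon in *.
  set (t := x / (64/100)).
  assert (Ht : 0 <= t <= 1) by (unfold t; split; [apply Rmult_le_pos; lra|
    apply Rmult_le_reg_r with (64/100); [lra|]; unfold Rdiv; rewrite Rmult_assoc, Rinv_l; lra]).
  assert (Ex : x = 64/100 * t) by (unfold t; field).
  rewrite Ex. repeat split; apply abs_le_iff; split; field_simplify. all: try nra. all: pose proof (pow2_ge_0 (t-1/2)); pose proof (Rmult_le_pos ((1-t)^2) (1+2*t) ltac:(nra) ltac:(lra)); nra.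
Qed.

Lemma P0_bounds : Rabs (P2 0) <= 15 /\ Rabs (P3 0) <= 46 /\ Rabs (Q2 0) <= 2 /\ Rabs (Q3 0) <= 3.
Proof.
  unfold Q2, Q3, P2, P3, P1, Upsilon. repeat split; apply abs_le_iff; split; field_simplify; lra.
Qed.

Lemma div_nonneg a b : 0 <= a -> 0 < b -> 0 <= a / b.
Proof. intros; apply Rmult_le_pos; [auto|left; apply Rinv_0_lt_compat; auto]. Qed.

Lemma div_le_l a b c : 0 < b -> a <= c * b -> a / b <= c.
Proof. intros Hb H. apply Rmult_le_reg_r with b; auto. unfold Rdiv; rewrite Rmult_assoc, Rinv_l; lra. Qed.

Lemma cm_iv v : cm (mkC 0 v) = Rabs v.
Proof. unfold cm, Cnorm2; simpl. rewrite abs_sqrt; f_equal; ring. Qed.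

Lemma cm_w u v : 0 <= u -> u <= cm (w_of u v) /\ Rabs v <= cm (w_of u v).
Proof.
  intros Hu. unfold cm, Cnorm2, w_of; simpl. split.
  - rewrite <- (sqrt_square u) at 1 by lra. apply sqrt_le_1_alt. nra.
  - rewrite abs_sqrt. apply sqrt_le_1_alt. nra.
Qed.

Ltac nz := apply cm_zero_inv; rewrite ?cm_mul, ?cm_RtoC;
  repeat apply Rmult_lt_0_compat; try (apply Rabs_pos_lt); auto; try nra.

Lemma abs_pos_id x : 0 <= x -> Rabs x = x.
Proof. intros; apply Rabs_right; lra. Qed.

Lemma D_bound u v x : 10 <= u -> 0 <= x <= Upsilon -> cm (Dfun u v x) <= 4.
Proof.
  intros Hu Hx. destruct (P_bounds x Hx) as (B0 & B1 & B2 & B3).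
  destruct (cm_w u v) as [Hn1 Hn2]; [lra|].
  set (n := cm (w_of u v)) in *. assert (Hn : 0 < n) by lra.
  pose proof kappa_bounds.
  cbv beta zeta delta [Dfun].
  eapply Rle_trans; [apply cm_sub|]. eapply Rle_trans; [apply Rplus_le_compat_r, cm_add|].
  rewrite !cm_mul, !cm_div by nz. rewrite !cm_mul, !cm_RtoC, cm_iv. fold n.
  rewrite !(abs_pos_id u), (abs_pos_id (2*kappa)), (abs_pos_id (4 * kappa ^ 2)) by nra.
  assert (T1 : Rabs v / n <= 1) by (apply div_le_l; nra).
  assert (T2 : u / (2 * kappa * (n * n)) <= 1/19) by (apply div_le_l; nra).
  assert (T3 : u / (4 * kappa ^ 2 * (n * (n * n))) <= 1/390) .
  { apply div_le_l. repeat apply Rmult_lt_0_compat; nra. assert (100 <= n * n) by nra. assert (100 * n <= n * (n * n)) by nra. assert (kappa^2 >= 98/100) by nra. nra. }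
  assert (0 <= Rabs v / n) by (apply Rmult_le_pos; [apply Rabs_pos|left; apply Rinv_0_lt_compat; auto]).
  assert (0 <= u / (2 * kappa * (n * n))) by (apply div_nonneg; [lra| repeat apply Rmult_lt_0_compat; nra]).
  assert (0 <= u / (4 * kappa ^ 2 * (n * (n * n)))) by (apply div_nonneg; [lra| repeat apply Rmult_lt_0_compat; nra]).
  pose proof (Rabs_pos (P1 x)); pose proof (Rabs_pos (P2 x)); pose proof (Rabs_pos (P3 x)).
  nra.
Qed.

Lemma E_bound u v x : 10 <= u -> 0 <= x <= Upsilon -> cm (Efun u v x) <= 4.
Proof.
  intros Hu Hx. destruct (P_bounds x Hx) as (B0 & B1 & B2 & B3).
  destruct (cm_w u v) as [Hn1 Hn2]; [lra|].
  set (n := cm (w_of u v)) in *. assert (Hn : 0 < n) by lra.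
  pose proof kappa_bounds.
  cbv beta zeta delta [Efun].
  eapply Rle_trans; [apply cm_sub|]. eapply Rle_trans; [apply Rplus_le_compat_r, cm_add|].
  rewrite !cm_mul, !cm_div by nz. rewrite !cm_mul, !cm_RtoC, cm_iv. fold n.
  rewrite !(abs_pos_id u), (abs_pos_id (2*kappa)), (abs_pos_id (4 * kappa ^ 2)) by (try apply Rmult_le_pos; nra).
  assert (T1 : u / n <= 1) by (apply div_le_l; nra).
  assert (T2 : Rabs v / (2 * kappa * (n * n)) <= 1/19) by (apply div_le_l; nra).
  assert (T3 : Rabs v / (4 * kappa ^ 2 * (n * (n * n))) <= 1/390) .
  { apply div_le_l. repeat apply Rmult_lt_0_compat; nra. assert (100 <= n * n) by nra. assert (100 * n <= n * (n * n)) by nra. assert (kappa^2 >= 98/100) by nra. nra. }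
  assert (0 <= u / n) by (apply div_nonneg; lra).
  assert (0 <= Rabs v / (2 * kappa * (n * n))) by (apply div_nonneg; [apply Rabs_pos| repeat apply Rmult_lt_0_compat; nra]).
  assert (0 <= Rabs v / (4 * kappa ^ 2 * (n * (n * n)))) by (apply div_nonneg; [apply Rabs_pos| repeat apply Rmult_lt_0_compat; nra]).
  pose proof (Rabs_pos (P1 x)); pose proof (Rabs_pos (P2 x)); pose proof (Rabs_pos (P3 x)).
  nra.
Qed.

Definition Gf (v x : R) : C := Cadd (Cmul (mkC 0 (-2 * v * kappa)) (RtoC (P x))) (RtoC (P1 x)).

Lemma G_bound v x : 0 <= x <= Upsilon -> cm (Gf v x) <= 2 * Rabs v + 3.
Proof.
  intros Hx. destruct (P_bounds x Hx) as (B0 & B1 & B2 & B3). pose proof kappa_bounds.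
  unfold Gf. eapply Rle_trans; [apply cm_add|]. rewrite cm_mul, cm_iv, !cm_RtoC.
  rewrite !Rabs_mult, (abs_pos_id kappa) by lra. replace (Rabs (-2)) with 2 by (unfold Rabs; destruct Rcase_abs; lra).
  pose proof (Rabs_pos v); pose proof (Rabs_pos (P x)). assert (kappa * Rabs (P x) <= 1) by nra. assert (Rabs v * (kappa * Rabs (P x)) <= Rabs v) by nra. nra.
Qed.

Lemma Im_distr g a b c : Im (Cmul g (Csub (Cadd a b) c)) = Im (Cmul g a) + Im (Cmul g b) - Im (Cmul g c).
Proof. destruct g, a, b, c; unfold Cmul, Csub, Cadd, Copp; simpl; ring. Qed.

Lemma Im_GA1 u v p p1 : 0 < u ->
  Im (Cmul (Cadd (Cmul (mkC 0 (-2*v*kappa)) (RtoC p)) (RtoC p1))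
           (Cmul (Cdiv (RtoC u) (w_of u v)) (RtoC p1)))
  = v * (- (u*p1*p1) - 2*kappa*p*p1*(u*u)) / (u*u+v*v).
Proof.
  intros Hu. unfold Cmul, Cadd, Cdiv, Cinv, RtoC, w_of, Cnorm2; simpl. field. nra.
Qed.

Lemma Im_GE_bound u v x : 10 <= u -> Rabs v <= 5 * u -> 0 <= x <= Upsilon ->
  Rabs (Im (Cmul (Gf v x) (Efun u v x))) <= Rabs v * (8 + u).
Proof.
  intros Hu Hv Hx. destruct (P_bounds x Hx) as (B0 & B1 & B2 & B3).
  destruct (cm_w u v) as [Hn1 Hn2]; [lra|].
  set (n := cm (w_of u v)) in *. assert (Hn : 0 < n) by lra.
  pose proof kappa_bounds. pose proof (G_bound v x Hx) as HG.
  cbv beta zeta delta [Efun]. rewrite Im_distr.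
  assert (HA2 : Rabs (Im (Cmul (Gf v x) (Cmul (Cdiv (mkC 0 v) (Cmul (RtoC (2 * kappa))
        (Cmul (w_of u v) (w_of u v)))) (RtoC (P2 x))))) <= (2 * Rabs v + 3) * (Rabs v * (1/13))).
  { eapply Rle_trans; [apply abs_Im_le|]. rewrite !cm_mul, cm_div by nz.
    rewrite !cm_mul, !cm_RtoC, cm_iv. fold n. rewrite (abs_pos_id (2*kappa)) by lra.
    apply Rmult_le_compat; auto using cm_nonneg.
    apply Rmult_le_pos; [apply div_nonneg; [apply Rabs_pos|repeat apply Rmult_lt_0_compat; nra]|apply Rabs_pos].
    assert (T2 : Rabs v / (2 * kappa * (n * n)) <= Rabs v * (1/198)).
    { apply div_le_l. repeat apply Rmult_lt_0_compat; nra. pose proof (Rabs_pos v). assert (100 <= n * n) by nra. assert (198 <= 2 * kappa * (n * n)) by nra. nra. }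
    pose proof (Rabs_pos v). pose proof (Rabs_pos (P2 x)).
    assert (0 <= Rabs v / (2 * kappa * (n * n))) by (apply div_nonneg; [apply Rabs_pos| repeat apply Rmult_lt_0_compat; nra]).
    nra. }
  assert (HA3 : Rabs (Im (Cmul (Gf v x) (Cmul (Cdiv (mkC 0 v) (Cmul (RtoC (4 * kappa ^ 2))
        (Cmul (w_of u v) (Cmul (w_of u v) (w_of u v))))) (RtoC (P3 x))))) <= (2 * Rabs v + 3) * (Rabs v * (1/80))).
  { eapply Rle_trans; [apply abs_Im_le|]. rewrite !cm_mul, cm_div by nz.
    rewrite !cm_mul, !cm_RtoC, cm_iv. fold n. rewrite (abs_pos_id (4*kappa^2)) by nra.
    apply Rmult_le_compat; auto using cm_nonneg.
    apply Rmult_le_pos; [apply div_nonneg; [apply Rabs_pos|repeat apply Rmult_lt_0_compat; nra]|apply Rabs_pos].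
    assert (T2 : Rabs v / (4 * kappa ^ 2 * (n * (n * n))) <= Rabs v * (1/3900)).
    { apply div_le_l. repeat apply Rmult_lt_0_compat; nra. pose proof (Rabs_pos v).
      assert (100 <= n * n) by nra. assert (1000 <= n * (n * n)) by nra. assert (kappa^2 >= 98/100) by nra. assert (3900 <= 4 * kappa ^ 2 * (n * (n * n))) by nra. nra. }
    pose proof (Rabs_pos v). pose proof (Rabs_pos (P3 x)).
    assert (0 <= Rabs v / (4 * kappa ^ 2 * (n * (n * n)))) by (apply div_nonneg; [apply Rabs_pos| repeat apply Rmult_lt_0_compat; nra]).
    nra. }
  unfold Gf at 1. rewrite Im_GA1 by lra.
  assert (HA1 : Rabs (v * (- (u * P1 x * P1 x) - 2 * kappa * P x * P1 x * (u * u)) / (u * u + v * v))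
     <= Rabs v * 7).
  { unfold Rdiv. rewrite !Rabs_mult, Rabs_inv, (abs_pos_id (u*u+v*v)) by nra.
    rewrite Rmult_assoc. apply Rmult_le_compat_l; [apply Rabs_pos|].
    apply div_le_l; [nra|]. eapply Rle_trans; [apply Rabs_triang|]. rewrite Rabs_Ropp, !Rabs_mult.
    rewrite Rabs_Ropp, !Rabs_mult, !(abs_pos_id u), (abs_pos_id kappa), (abs_pos_id 2) by lra.

    pose proof (Rabs_pos (P x)); pose proof (Rabs_pos (P1 x)). 
    assert (Rabs (P1 x) * Rabs (P1 x) <= 9) by nra.
    assert (Rabs (P x) * Rabs (P1 x) <= 3) by nra.
    assert (u * (Rabs (P1 x) * Rabs (P1 x)) <= 9 * u) by nra.
    assert (kappa * (Rabs (P x) * Rabs (P1 x)) <= 3) by nra. assert (kappa * (Rabs (P x) * Rabs (P1 x)) * (u*u) <= 3 * (u*u)) by (apply Rmult_le_compat_r; nra).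
    assert (0 <= v * v) by nra. nra. }
  pose proof (Rabs_pos v).
  eapply Rle_trans; [apply Rabs_triang|]. unfold Rminus. eapply Rle_trans; [apply Rplus_le_compat; [apply Rabs_triang|apply Req_le; apply Rabs_Ropp]|].
  fold (Gf v x) in *. unfold Rminus in HA1. assert ((2 * Rabs v + 3) * (1/13 + 1/80) <= 1 + u) by lra. assert (Rabs v * ((2 * Rabs v + 3) * (1/13 + 1/80)) <= Rabs v * (1 + u)) by (apply Rmult_le_compat_l; lra). nra.
Qed.

Lemma exp_mono x y : x <= y -> exp x <= exp y.
Proof. intros [H|H]; [left; apply exp_increasing; auto| subst; lra]. Qed.

Lemma exp_le1 x : x <= 0 -> exp x <= 1.
Proof. intros; rewrite <- exp_0; apply exp_mono; auto. Qed.

Lemma frac_bound a b c d K : 0 <= a <= c -> 0 <= b <= d -> K <= 0 ->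
  exp K * (a + b) <= c + d.
Proof.
  intros. pose proof (exp_le1 K H1). pose proof (exp_pos K). nra.
Qed.

Lemma calP_bound u v : 10 <= u -> cm (calP u v) <= 1.
Proof.
  intros Hu. destruct P0_bounds as (B2 & B3 & _ & _). pose proof kappa_bounds.
  destruct (cm_w u v) as [Hn1 Hn2]; [lra|].
  set (n := cm (w_of u v)) in *. assert (Hn : 0 < n) by lra.
  cbv beta zeta delta [calP].
  set (z := Cmul (RtoC (-2 * kappa)) (w_of u v)).
  assert (Hz : cm z = 2 * kappa * n).
  { unfold z; rewrite cm_mul, cm_RtoC. fold n. rewrite Rabs_left by lra. ring. }
  assert (Hz0 : 19 <= cm z) by nra.
  assert (HRe : Re z <= 0) by (unfold z; simpl; nra).
  fold z. rewrite cm_mul, cm_exp.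
  eapply Rle_trans; [apply Rmult_le_compat_l; [left; apply exp_pos| apply cm_add]|].
  rewrite !cm_div by (apply cm_zero_inv; rewrite ?cm_mul; nra).
  rewrite !cm_mul, !cm_RtoC.
  replace 1 with (1/2 + 1/2) by field. apply frac_bound; auto; split;
    try (apply div_nonneg; [apply Rabs_pos| rewrite ?cm_mul; nra]).
  - apply div_le_l; nra.
  - apply div_le_l. nra. assert (361 <= cm z * cm z) by nra. assert (361 * 19 <= cm z * (cm z * cm z)) by nra. nra.
Qed.

Lemma calQ_bound u v : 10 <= u -> cm (calQ u v) <= 1.
Proof.
  intros Hu. destruct P0_bounds as (_ & _ & B2 & B3). pose proof kappa_bounds.
  destruct (cm_w u v) as [Hn1 Hn2]; [lra|].
  set (n := cm (w_of u v)) in *. assert (Hn : 0 < n) by lra.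
  cbv beta zeta delta [calQ].
  set (z := Cmul (RtoC (-2 * kappa * (1 - Upsilon))) (w_of u v)).
  assert (Hz : cm z = 2 * kappa * (1 - Upsilon) * n).
  { unfold z; rewrite cm_mul, cm_RtoC. fold n. unfold Upsilon. rewrite Rabs_left by lra. ring. }
  assert (Hz0 : 7 <= cm z) by (unfold Upsilon in Hz; nra).
  assert (HRe : Re z <= 0) by (unfold z, Upsilon; simpl; nra).
  fold z. rewrite cm_mul, cm_exp.
  eapply Rle_trans; [apply Rmult_le_compat_l; [left; apply exp_pos| apply cm_add]|].
  rewrite !cm_div by (apply cm_zero_inv; rewrite ?cm_mul; nra).
  rewrite !cm_mul, !cm_RtoC.
  replace 1 with (1/2 + 1/2) by field. apply frac_bound; auto; split;
    try (apply div_nonneg; [apply Rabs_pos| rewrite ?cm_mul; nra]).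
  - apply div_le_l; nra.
  - apply div_le_l. nra. assert (49 <= cm z * cm z) by nra. assert (49 * 7 <= cm z * (cm z * cm z)) by nra. nra.
Qed.

Lemma V1_bound u v : 10 <= u -> scrV1 u v <= 1 + 3/10 * exp (-(7/10) * u).
Proof.
  intros Hu. pose proof kappa_bounds. unfold scrV1.
  assert (HI : Rabs (Rint (fun x => exp (-2 * u * (1 - x) * kappa) * P1 x ^ 2) 0 Upsilon)
     <= (Upsilon - 0) * (exp (-(7/10) * u) * 9)).
  { apply Rint_bound. unfold Upsilon; lra. intros x Hx.
    destruct (P_bounds x Hx) as (_ & B1 & _).
    rewrite Rabs_mult, (abs_pos_id (exp _)) by (left; apply exp_pos).
    rewrite <- RPow_abs. apply Rmult_le_compat. left; apply exp_pos. apply pow_le, Rabs_pos.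
    apply exp_mono. unfold Upsilon in Hx. assert ((1-x)*kappa >= 35/100) by nra. nra. pose proof (Rabs_pos (P1 x)). simpl. nra. }
  apply Rabs_le_between' in HI || idtac.
  apply abs_le_iff in HI. unfold Upsilon in HI.
  assert (Hc : 0 < 1 / (2 * u * kappa)) by (apply div_nonneg; nra) || (unfold Rdiv; apply Rmult_lt_0_compat; [lra|apply Rinv_0_lt_compat; nra]).
  assert (Hc2 : 1 / (2 * u * kappa) <= 10/198) by (apply div_le_l; nra). assert (1 / (2 * u * kappa) * Rint (fun x => exp (-2 * u * (1 - x) * kappa) * P1 x ^ 2) 0 (64/100) <= 1 / (2 * u * kappa) * ((64/100 - 0) * (exp (-(7/10) * u) * 9))) by (apply Rmult_le_compat_l; lra).
  pose proof (exp_pos (-(7/10) * u)).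
  unfold Upsilon. nra.
Qed.

Lemma Re_mul_le z w : Re (Cmul z w) <= cm z * cm w.
Proof. rewrite <- cm_mul. apply Re_le. Qed.

Lemma cm_exp_i t : cm (Cexp (mkC 0 t)) = 1.
Proof. rewrite cm_exp; simpl; apply exp_0. Qed.

Lemma V2_bound u v : 10 <= u -> scrV2 u v <= 11 * exp (-4 * u).
Proof.
  intros Hu. pose proof kappa_bounds. unfold scrV2.
  assert (HI : 0 <= Rint (fun x => exp (-2 * u * (1 - x) * kappa) * Cnorm2 (Dfun u v x)) 0 Upsilon).
  { apply Rint_nonneg. unfold Upsilon; lra. intros x Hx.
    apply Rmult_le_pos; [left; apply exp_pos|apply Cnorm2_nonneg]. }
  assert (Hc : 0 <= 1 / (2 * u * kappa)) by (apply div_nonneg; nra).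
  assert (HJ : cm (Cint (fun x => Cmul (Cexp (mkC 0 (-2 * v * (1 - x) * kappa))) (Dfun u v x)) 0 Upsilon)
     <= 2 * (Upsilon - 0) * 4).
  { apply cm_Cint. unfold Upsilon; lra. intros x Hx. rewrite cm_mul, cm_exp_i.
    pose proof (D_bound u v x Hu Hx). lra. }
  pose proof (calP_bound u v Hu) as HP.
  assert (HR : Re (Cmul (Cconj (calP u v))
          (Cint (fun x => Cmul (Cexp (mkC 0 (-2 * v * (1 - x) * kappa))) (Dfun u v x)) 0 Upsilon))
     <= 2 * (Upsilon - 0) * 4).
  { eapply Rle_trans; [apply Re_mul_le|]. rewrite cm_conj.
    pose proof (cm_nonneg (calP u v)). pose proof (cm_nonneg (Cint (fun x => Cmul (Cexp (mkC 0 (-2 * v * (1 - x) * kappa))) (Dfun u v x)) 0 Upsilon)).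
    unfold Upsilon in *. nra. }
  assert (E1 : exp (2 * u * kappa * (1 - Upsilon)) <= exp (2 * u * kappa)) by (apply exp_mono; unfold Upsilon; nra).
  assert (E2 : 1 <= exp (2 * u * kappa * (1 - Upsilon))) by (apply Rle_trans with (exp 0); [rewrite exp_0; lra| apply exp_mono; unfold Upsilon; nra]).
  pose proof (Cnorm2_nonneg (calP u v)). pose proof (Cnorm2_nonneg (Cadd (calP u v) (calQ u v))).
  pose proof (exp_pos (-4 * u)).
  rewrite (Rmult_comm 11). apply Rmult_le_compat_l. lra.
  assert (- (1 / (2 * u * kappa)) * Rint (fun x => exp (-2 * u * (1 - x) * kappa) * Cnorm2 (Dfun u v x)) 0 Upsilon <= 0) by nra.
  assert ((exp (2 * u * kappa * (1 - Upsilon)) - exp (2 * u * kappa)) * Cnorm2 (calP u v) <= 0) by nra.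
  assert ((1 - exp (2 * u * kappa * (1 - Upsilon))) * Cnorm2 (Cadd (calP u v) (calQ u v)) <= 0) by nra.
  unfold Upsilon in *. lra.
Qed.

Lemma sin_abs_le x : Rabs (sin x) <= Rabs x.
Proof.
  assert (Hp : forall y, 0 < y -> Rabs (sin y) <= y).
  { intros y Hy. apply abs_le_iff. pose proof (sin_lt_x y Hy). pose proof (SIN_bound y).
    destruct (Rle_lt_dec 1 y). lra.
    pose proof PI2_1. assert (0 <= sin y) by (apply sin_ge_0; lra). lra. }
  destruct (Rtotal_order x 0) as [H|[H|H]].
  - rewrite <- (Rabs_Ropp x), <- (Rabs_Ropp (sin x)), <- sin_neg.
    rewrite (abs_pos_id (-x)) by lra. apply Hp; lra.
  - subst. rewrite sin_0; lra.
  - rewrite (abs_pos_id x) by lra. auto.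
Qed.

Lemma Re_split e a b c : Re (Cmul e (Cadd (Cadd a b) c)) = Re (Cmul e a) + Re (Cmul e (Cadd b c)).
Proof. destruct e, a, b, c; unfold Cmul, Cadd; simpl; ring. Qed.

Lemma Re_T1 e a j : a <> 0 ->
  Re (Cmul e (Cmul (Cinv (mkC 0 a)) j)) = Re e * Im j / a + Im e * Re j / a.
Proof. intros. destruct e, j; unfold Cmul, Cinv, Cnorm2; simpl. field. auto. Qed.

Lemma Im_scal r z : Im (Cmul (RtoC r) z) = r * Im z.
Proof. destruct z; unfold Cmul, RtoC; simpl; ring. Qed.

Lemma V3_bound u v : 10 <= u -> v <> 0 -> Rabs v <= 5 * u ->
  scrV3 u v <= exp (-2 * u) * (80 * u + 38).
Proof.
  intros Hu Hv0 Hv. pose proof kappa_bounds.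
  assert (Hva : 0 < Rabs v) by (apply Rabs_pos_lt; auto).
  unfold scrV3; cbv zeta.
  change (fun x => Cadd (Cmul (mkC 0 (-2 * v * kappa)) (RtoC (P x))) (RtoC (P1 x))) with (Gf v).
  rewrite Re_split.
  set (Ew := Cexp (Cmul (RtoC (-2)) (w_of u v))).
  assert (HEw : cm Ew = exp (-2 * u)) by (unfold Ew; rewrite cm_exp; simpl; f_equal; ring).
  set (J := Cint (fun x => Cmul (RtoC (exp (-2 * u * (1 - x) * kappa))) (Cmul (Gf v x) (Efun u v x))) 0 Upsilon).
  set (T2 := Cmul (calP u v) (Cint (fun x => Cmul (Cexp (mkC 0 (2 * v * (1 - x) * kappa))) (Gf v x)) 0 Upsilon)).
  set (T3 := Cmul (Csub (RtoC 1) (Cexp (mkC 0 (2 * v * (1 - Upsilon) * kappa)))) (Cadd (calP u v) (calQ u v))).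
  assert (HT2 : cm T2 <= 128/100 * (10 * u + 3)).
  { unfold T2. rewrite cm_mul. pose proof (calP_bound u v Hu).
    assert (cm (Cint (fun x => Cmul (Cexp (mkC 0 (2 * v * (1 - x) * kappa))) (Gf v x)) 0 Upsilon) <= 2 * (Upsilon - 0) * (10 * u + 3)).
    { apply cm_Cint. unfold Upsilon; lra. intros x Hx. rewrite cm_mul, cm_exp_i.
      pose proof (G_bound v x Hx). lra. }
    unfold Upsilon in *. pose proof (cm_nonneg (calP u v)).
    pose proof (cm_nonneg (Cint (fun x => Cmul (Cexp (mkC 0 (2 * v * (1 - x) * kappa))) (Gf v x)) 0 (64/100))). nra. }
  assert (HT3 : cm T3 <= 4).
  { unfold T3. rewrite cm_mul. pose proof (calP_bound u v Hu). pose proof (calQ_bound u v Hu).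
    assert (cm (Csub (RtoC 1) (Cexp (mkC 0 (2 * v * (1 - Upsilon) * kappa)))) <= 2).
    { eapply Rle_trans; [apply cm_sub|]. rewrite cm_RtoC, cm_exp_i, Rabs_R1. lra. }
    assert (cm (Cadd (calP u v) (calQ u v)) <= 2).
    { eapply Rle_trans; [apply cm_add|]. lra. }
    pose proof (cm_nonneg (Csub (RtoC 1) (Cexp (mkC 0 (2 * v * (1 - Upsilon) * kappa))))).
    pose proof (cm_nonneg (Cadd (calP u v) (calQ u v))). nra. }
  assert (H23 : Re (Cmul Ew (Cadd T2 T3)) >= - (exp (-2 * u) * (128/100 * (10 * u + 3) + 4))).
  { assert (Rabs (Re (Cmul Ew (Cadd T2 T3))) <= exp (-2 * u) * (128/100 * (10 * u + 3) + 4)).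
    { eapply Rle_trans; [apply abs_Re_le|]. rewrite cm_mul, HEw. apply Rmult_le_compat_l.
      left; apply exp_pos. eapply Rle_trans; [apply cm_add|]. lra. }
    apply abs_le_iff in H0. lra. }
  assert (Ha : -2 * v * kappa <> 0) by (intro E; apply Hv0; nra).
  rewrite Re_T1 by auto.
  assert (HY : Rabs (Im J) <= (Upsilon - 0) * (Rabs v * (8 + u))).
  { unfold J, Cint; cbn [Im Re]. apply Rint_bound. unfold Upsilon; lra. intros x Hx.
    rewrite Im_scal, Rabs_mult, (abs_pos_id (exp _)) by (left; apply exp_pos).
    pose proof (Im_GE_bound u v x Hu Hv Hx). 
    assert (exp (-2 * u * (1 - x) * kappa) <= 1) by (apply exp_le1; unfold Upsilon in Hx; assert (0 <= (1-x)*kappa) by nra; nra).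
    pose proof (Rabs_pos (Im (Cmul (Gf v x) (Efun u v x)))). pose proof (exp_pos (-2 * u * (1 - x) * kappa)).
    nra. }
  assert (HX : Rabs (Re J) <= (Upsilon - 0) * ((2 * Rabs v + 3) * 4)).
  { unfold J, Cint; cbn [Im Re]. apply Rint_bound. unfold Upsilon; lra. intros x Hx.
    eapply Rle_trans; [apply abs_Re_le|]. rewrite !cm_mul, cm_RtoC, (abs_pos_id (exp _)) by (left; apply exp_pos).
    pose proof (G_bound v x Hx). pose proof (E_bound u v x Hu Hx).
    assert (exp (-2 * u * (1 - x) * kappa) <= 1) by (apply exp_le1; unfold Upsilon in Hx; assert (0 <= (1-x)*kappa) by nra; nra).
    pose proof (cm_nonneg (Gf v x)). pose proof (cm_nonneg (Efun u v x)). pose proof (exp_pos (-2 * u * (1 - x) * kappa)).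
    assert (cm (Gf v x) * cm (Efun u v x) <= (2 * Rabs v + 3) * 4) by nra.
    nra. }
  assert (HReE : Re Ew = exp (-2 * u) * cos (-2 * v)) by (unfold Ew; simpl; f_equal; f_equal; ring).
  assert (HImE : Im Ew = exp (-2 * u) * sin (-2 * v)) by (unfold Ew; simpl; f_equal; f_equal; ring).
  rewrite HReE, HImE.
  pose proof (sin_abs_le (-2 * v)) as Hs. pose proof (COS_bound (-2 * v)) as Hc.
  change (Im (Cint _ 0 Upsilon)) with (Im J). change (Re (Cint _ 0 Upsilon)) with (Re J).
  assert (Habs_a : Rabs (-2 * v * kappa) = 2 * kappa * Rabs v).
  { rewrite !Rabs_mult, (abs_pos_id kappa) by lra. replace (Rabs (-2)) with 2 by (unfold Rabs; destruct Rcase_abs; lra). ring. }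
  assert (Hc' : Rabs (cos (-2 * v)) <= 1) by (apply abs_le_iff; lra).
  assert (Hs' : Rabs (sin (-2 * v)) <= 2 * Rabs v).
  { rewrite Rabs_mult in Hs. replace (Rabs (-2)) with 2 in Hs by (unfold Rabs; destruct Rcase_abs; lra). lra. }
  unfold Upsilon in HX, HY.
  assert (A1 : Rabs (cos (-2 * v) * Im J / (-2 * v * kappa)) <= 3 + u).
  { unfold Rdiv. rewrite !Rabs_mult, Rabs_inv, Habs_a. apply div_le_l. nra.
    pose proof (Rabs_pos (cos (-2 * v))). pose proof (Rabs_pos (Im J)).
    assert (Rabs (cos (-2 * v)) * Rabs (Im J) <= Rabs (Im J)) by nra.
    assert ((64/100 - 0) * (Rabs v * (8 + u)) <= (3 + u) * (2 * kappa * Rabs v)) by nra.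
    lra. }
  assert (A2 : Rabs (sin (-2 * v) * Re J / (-2 * v * kappa)) <= 26 * u + 8).
  { unfold Rdiv. rewrite !Rabs_mult, Rabs_inv, Habs_a. apply div_le_l. nra.
    pose proof (Rabs_pos (sin (-2 * v))). pose proof (Rabs_pos (Re J)).
    assert (Rabs (sin (-2 * v)) * Rabs (Re J) <= 2 * Rabs v * ((64/100 - 0) * ((2 * Rabs v + 3) * 4))) by (apply Rmult_le_compat; lra).
    assert (2 * Rabs v * ((64/100 - 0) * ((2 * Rabs v + 3) * 4)) <= (26 * u + 8) * (2 * kappa * Rabs v)).
    { assert ((64/100 - 0) * ((2 * Rabs v + 3) * 4) <= (26 * u + 8) * kappa) by nra. nra. }
    lra. }
  replace (exp (-2 * u) * cos (-2 * v) * Im J / (-2 * v * kappa) + exp (-2 * u) * sin (-2 * v) * Re J / (-2 * v * kappa))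
    with (exp (-2 * u) * (cos (-2 * v) * Im J / (-2 * v * kappa) + sin (-2 * v) * Re J / (-2 * v * kappa))) by (unfold Rdiv; ring).
  apply abs_le_iff in A1. apply abs_le_iff in A2. pose proof (exp_pos (-2 * u)).
  assert (exp (-2 * u) * (cos (-2 * v) * Im J / (-2 * v * kappa) + sin (-2 * v) * Re J / (-2 * v * kappa))
     >= - (exp (-2 * u) * (27 * u + 11))) by nra.
  assert (exp (-2 * u) * (80 * u + 38) = 2 * (exp (-2 * u) * (27 * u + 11)) + 2 * (exp (-2 * u) * (128 / 100 * (10 * u + 3) + 4)) + exp (-2*u) * (4/10 * u + 32/100)) by field. assert (0 <= exp (-2*u) * (4/10 * u + 32/100)) by (apply Rmult_le_pos; lra). change (Re (Cmul Ew (Cadd _ _))) with (Re (Cmul Ew (Cadd T2 T3))). lra.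
Qed.

Lemma exp_pow_n n x : exp x ^ n = exp (INR n * x).
Proof.
  induction n; simpl. rewrite Rmult_0_l, exp_0; ring.
  rewrite IHn, <- exp_plus. f_equal. destruct n; simpl; ring.
Qed.

Lemma final_ineq u : 10 <= u ->
  3/10 * exp (-(7/10) * u) + 11 * exp (-4 * u) + exp (-2 * u) * (80 * u + 38) <= exp (- u / 2).
Proof.
  intros Hu.
  set (a := exp (- u / 2)). assert (Ha : 0 < a) by apply exp_pos.
  assert (E1 : exp (-(7/10) * u) = a * exp (-(2/10) * u)) by (unfold a; rewrite <- exp_plus; f_equal; field).
  assert (E2 : exp (-2 * u) = a * exp (-(15/10) * u)) by (unfold a; rewrite <- exp_plus; f_equal; field).
  assert (E3 : exp (-4 * u) <= exp (-2 * u)) by (apply exp_mono; lra).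
  assert (B1 : exp (-(2/10) * u) <= 1/3).
  { assert (H1 : exp (-(2/10) * u) * exp ((2/10) * u) = 1) by (rewrite <- exp_plus, <- exp_0; f_equal; ring).
    pose proof (exp_ineq1_le ((2/10) * u)). pose proof (exp_pos (-(2/10) * u)). nra. }
  assert (B2 : exp (-(15/10) * u) * (80 * u + 49) <= 6/10).
  { assert (H1 : exp (-(15/10) * u) * exp ((15/100) * u) ^ 10 = 1).
    { rewrite exp_pow_n, <- exp_plus, <- exp_0. f_equal. rewrite (INR_IZR_INZ 10). simpl. field. }
    set (t := exp ((15/100) * u)) in *.
    assert (Ht : 25/10 <= t) by (pose proof (exp_ineq1_le ((15/100) * u)); unfold t; lra).
    assert (Ht2 : 1 + (15/100) * u <= t) by (pose proof (exp_ineq1_le ((15/100) * u)); unfold t; lra).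
    assert (Ht9 : (25/10) ^ 9 <= t ^ 9) by (apply pow_incr; lra).
    assert (H10 : t ^ 10 = t * t ^ 9) by ring.
    assert (80 * u + 49 <= 6/10 * t ^ 10).
    { rewrite H10. assert (80 * u + 49 <= 534 * t) by lra.
      assert (534 * t <= 6 / 10 * (t * (25/10)^9)) by (simpl; nra). nra. }
    pose proof (exp_pos (-(15/10) * u)). nra. }
  rewrite E1. pose proof (exp_pos (-(2/10) * u)). pose proof (exp_pos (-(15/10) * u)).
  assert (11 * exp (-4 * u) + exp (-2 * u) * (80 * u + 38) <= exp (-2 * u) * (80 * u + 49)) by nra.
  rewrite E2 in H1 |- *. 
  assert (a * exp (-(15 / 10) * u) * (80 * u + 49) <= a * (6/10)) by (rewrite Rmult_assoc; apply Rmult_le_compat_l; lra).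
  assert (3 / 10 * (a * exp (- (2 / 10) * u)) <= a * (1/10)) by nra.
  lra.
Qed.

Theorem lemma5p6 : forall u v : R,
  10 <= u -> v <> 0 -> Rabs v <= 5 * u ->
  scrV u v <= 1 + exp (- u / 2).
Proof.
  intros u v Hu Hv0 Hv. unfold scrV.
  pose proof (V1_bound u v Hu). pose proof (V2_bound u v Hu). pose proof (V3_bound u v Hu Hv0 Hv).
  pose proof (final_ineq u Hu). lra.
Qed.
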